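(* Let $m\ge2$, $n\ge1$. For every injective group homomorphism $\rho:BS(1,m)\to T_n(\mathbb Z[1/m])$, the group $\rho(BS(1,m))$ has the congruence subgroup property.
   Context: $BS(1,m)=\langle a,t\mid tat^{-1}=a^m\rangle$. $T_n(\mathbb Z[1/m])$ is the group of invertible upper triangular $n\times n$ matrices with entries in $\mathbb Z[1/m]$. For a subgroup $G\le GL_n(\mathbb Z[1/m])$ and an integer $N>0$ coprime to $m$, the congruence subgroup $G(N)$ is $G\cap\ker\big(GL_n(\mathbb Z[1/m])\to GL_n(\mathbb Z/N\mathbb Z)\big)$ (reduction modulo $N$, using $\mathbb Z[1/m]/N\mathbb Z[1/m]\cong\mathbb Z/N\mathbb Z$). $G$ has the congruence subgroup property (CSP) if every finite-index subgroup of $G$ contains $G(N)$ for some $N>0$ coprime to $m$. *)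

(* Defs.v *)
From Stdlib Require Import Relations.
From mathcomp Require Import all_boot all_order all_algebra.
Set Implicit Arguments. Unset Strict Implicit. Unset Printing Implicit Defensive.
Import Order.TTheory GRing.Theory Num.Theory.
Local Open Scope ring_scope.

Definition inZinv (m : nat) (x : rat) : Prop :=
  exists (z : int) (k : nat), x = z%:~R / (m%:R ^+ k).

Definition entries_in (m n : nat) (A : 'M[rat]_n) : Prop :=
  forall i j : 'I_n, inZinv m (A i j).

Definition upper_tri (n : nat) (A : 'M[rat]_n) : Prop :=
  forall i j : 'I_n, (j < i)%N -> A i j = 0.

Definition in_Tn (m n : nat) (A : 'M[rat]_n) : Prop :=
  [/\ upper_tri A, entries_in m A, A \in unitmx & entries_in m (invmx A)].

(* ---------- The Baumslag-Solitar group BS(1,m) = < a, t | t a t^-1 = a^m >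
   given literally by its presentation: words in the free monoid on
   a, a^-1, t, t^-1, modulo the congruence generated by free cancellation and
   the defining relator.  A letter is (g, e): g = false is a, g = true is t;
   e = false is the generator, e = true its inverse. *)
Definition bsword := seq (bool * bool).

Definition la : bool * bool := (false, false).
Definition laI : bool * bool := (false, true).
Definition lt : bool * bool := (true, false).
Definition ltI : bool * bool := (true, true).

Definition bs_rule (m : nat) (x y : bsword) : Prop :=
  (exists g : bool, x = [:: (g, false); (g, true)] /\ y = [::]) \/
  (exists g : bool, x = [:: (g, true); (g, false)] /\ y = [::]) \/
  (x = [:: lt; la; ltI] /\ y = nseq m la).

Definition bs_step (m : nat) (u v : bsword) : Prop :=
  exists p s x y, bs_rule m x y /\ u = p ++ x ++ s /\ v = p ++ y ++ s.

Definition bs_eq (m : nat) : relation bsword :=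
  clos_refl_sym_trans bsword (bs_step m).

(* A group homomorphism rho : BS(1,m) -> GL_n(Q), presented on
   representative words: multiplicative, unital, and well defined on
   classes. *)
Definition bs_hom (m n : nat) (rho : bsword -> 'M[rat]_n) : Prop :=
  [/\ rho [::] = 1%:M,
      forall u v, rho (u ++ v) = rho u *m rho v
    & forall u v, bs_eq m u v -> rho u = rho v].

Definition bs_injective (m n : nat) (rho : bsword -> 'M[rat]_n) : Prop :=
  forall u v, rho u = rho v -> bs_eq m u v.

Definition bs_image (n : nat) (rho : bsword -> 'M[rat]_n) (g : 'M[rat]_n) : Prop :=
  exists w, g = rho w.

Definition is_subgroup_of (n : nat) (G H : 'M[rat]_n -> Prop) : Prop :=
  [/\ forall h, H h -> G h,
      H 1%:M,
      forall h k, H h -> H k -> H (h *m k)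
    & forall h, H h -> H (invmx h)].

Definition finite_index_in (n : nat) (G H : 'M[rat]_n -> Prop) : Prop :=
  exists s : seq 'M[rat]_n, (forall g, g \in s -> G g) /\
    forall g, G g -> exists2 g0, g0 \in s & exists2 h, H h & g = g0 *m h.

(* G(N) = G ∩ ker(GL_n(Z[1/m]) -> GL_n(Z/N)): all entries of g - 1 lie in
   N Z[1/m] (for N coprime to m, Z[1/m]/N Z[1/m] = Z/NZ). *)
Definition congr_sub (m n N : nat) (G : 'M[rat]_n -> Prop) (g : 'M[rat]_n) : Prop :=
  G g /\ forall i j : 'I_n, inZinv m ((g i j - (i == j)%:R) / N%:R).

Definition has_CSP (m n : nat) (G : 'M[rat]_n -> Prop) : Prop :=
  forall H, is_subgroup_of G H -> finite_index_in G H ->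
    exists N : nat, [/\ (0 < N)%N, coprime N m &
      forall g, congr_sub m N G g -> H g].

(* Main.v *)
Require Import Defs.
From mathcomp Require Import all_boot all_order all_algebra.
From mathcomp Require Import zify ring lra.
From Stdlib Require Import Relations.
Set Implicit Arguments. Unset Strict Implicit. Unset Printing Implicit Defensive.
Import Order.TTheory GRing.Theory Num.Theory.
Local Open Scope ring_scope.

Section Zm.
Variable m : nat.
Hypothesis m_gt0 : (0 < m)%N.

Lemma mR_neq0 : (m%:R : rat) != 0.
Proof. by rewrite pnatr_eq0 -lt0n. Qed.

Lemma mRX_neq0 k : (m%:R : rat) ^+ k != 0.
Proof. by rewrite expf_neq0 // mR_neq0. Qed.

Lemma intr_natX (k : nat) : ((m ^ k)%N%:Z)%:~R = (m%:R : rat) ^+ k.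
Proof. by rewrite -natrX. Qed.

Lemma Zm_int (z : int) : inZinv m z%:~R.
Proof. by exists z, 0%N; rewrite expr0 divr1. Qed.

Lemma Zm0 : inZinv m 0.
Proof. by have := Zm_int 0. Qed.

Lemma Zm1 : inZinv m 1.
Proof. by have := Zm_int 1. Qed.

Lemma Zm_nat (k : nat) : inZinv m k%:R.
Proof. by have := Zm_int k; rewrite -pmulrn. Qed.

Lemma Zm_add x y : inZinv m x -> inZinv m y -> inZinv m (x + y).
Proof.
move=> [z1 [k1 ->]] [z2 [k2 ->]].
exists (z1 * (m ^ k2)%:Z + z2 * (m ^ k1)%:Z), (k1 + k2)%N.
have h1 := mRX_neq0 k1; have h2 := mRX_neq0 k2.
rewrite exprD rmorphD !rmorphM /= !intr_natX.
field. by rewrite h1 h2.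
Qed.

Lemma Zm_mul x y : inZinv m x -> inZinv m y -> inZinv m (x * y).
Proof.
move=> [z1 [k1 ->]] [z2 [k2 ->]].
exists (z1 * z2), (k1 + k2)%N.
have h1 := mRX_neq0 k1; have h2 := mRX_neq0 k2.
rewrite exprD rmorphM /=. field. by rewrite h1 h2.
Qed.

Lemma Zm_opp x : inZinv m x -> inZinv m (- x).
Proof. move=> h; rewrite -mulN1r; apply: Zm_mul => //; exact: (Zm_int (-1)). Qed.

Lemma Zm_sub x y : inZinv m x -> inZinv m y -> inZinv m (x - y).
Proof. by move=> hx hy; apply: Zm_add => //; apply: Zm_opp. Qed.

Lemma Zm_invX k : inZinv m ((m%:R ^+ k)^-1).
Proof. by exists 1, k; rewrite mul1r. Qed.

Lemma Zm_mX k : inZinv m (m%:R ^+ k).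
Proof. by rewrite -natrX; apply: Zm_nat. Qed.

Lemma Zm_X x k : inZinv m x -> inZinv m (x ^+ k).
Proof. by move=> h; elim: k => [|k IH]; [rewrite expr0; exact: Zm1| rewrite exprS; apply: Zm_mul]. Qed.

Lemma Zm_sum (I : Type) (r : seq I) (P : pred I) (F : I -> rat) :
  (forall i, P i -> inZinv m (F i)) -> inZinv m (\sum_(i <- r | P i) F i).
Proof. by move=> h; apply: big_ind => //; [exact: Zm0 | exact: Zm_add]. Qed.

End Zm.

Definition cz (m N : nat) (x : rat) := inZinv m (x / N%:R).

Section Cz.
Variables (m N : nat).
Hypothesis m_gt0 : (0 < m)%N.

Lemma cz0 : cz m N 0.
Proof. by rewrite /cz mul0r; exact: Zm0. Qed.

Lemma cz_add x y : cz m N x -> cz m N y -> cz m N (x + y).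
Proof. by rewrite /cz mulrDl; apply: Zm_add. Qed.

Lemma cz_opp x : cz m N x -> cz m N (- x).
Proof. by rewrite /cz mulNr; apply: Zm_opp. Qed.

Lemma cz_sub x y : cz m N x -> cz m N y -> cz m N (x - y).
Proof. by move=> hx hy; apply: cz_add => //; apply: cz_opp. Qed.

Lemma cz_mull x y : inZinv m y -> cz m N x -> cz m N (y * x).
Proof. by rewrite /cz -mulrA; apply: Zm_mul. Qed.

Lemma cz_mulr x y : inZinv m y -> cz m N x -> cz m N (x * y).
Proof. by rewrite mulrC; apply: cz_mull. Qed.

Lemma cz_sum (I : Type) (r : seq I) (P : pred I) (F : I -> rat) :
  (forall i, P i -> cz m N (F i)) -> cz m N (\sum_(i <- r | P i) F i).
Proof. by move=> h; apply: big_ind => //; [exact: cz0 | exact: cz_add]. Qed.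

Lemma cz_dvd d x : (d %| N)%N -> (0 < N)%N -> cz m N x -> cz m d x.
Proof.
move=> /dvdnP[e ->] hN; rewrite /cz => h.
have -> : x / d%:R = (x / (e * d)%:R) * e%:R.
  have he : (e%:R : rat) != 0 by rewrite pnatr_eq0; apply/eqP => e0; move: hN; rewrite e0.
  have hd : (d%:R : rat) != 0 by rewrite pnatr_eq0; apply/eqP => e0; move: hN; rewrite e0 muln0.
  rewrite natrM; field; by rewrite he hd.
by apply: Zm_mul => //; apply: Zm_nat.
Qed.

Lemma cz_int z : (0 < N)%N -> coprime N m -> cz m N z%:~R -> (N%:Z %| z)%Z.
Proof.
move=> N0 cNm [w [k e]].
have hmk := mRX_neq0 m_gt0 k.
have hN : (N%:R : rat) != 0.
  by rewrite pnatr_eq0 -lt0n.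
have e2 : (z * (m ^ k)%N%:Z)%:~R = (w * N%:Z)%:~R :> rat.
  rewrite !rmorphM /= intr_natX.
  rewrite -(divfK hN (z%:~R)) e; field; exact: hmk.
have := intr_inj e2 => e3.
have : (N%:Z %| z * (m ^ k)%N%:Z)%Z by rewrite e3 dvdz_mull.
rewrite Gauss_dvdzl //.
rewrite coprimezE /=. exact: coprimeXr.
Qed.

End Cz.

Definition mZ (m n : nat) (X : 'M[rat]_n) := forall i j, inZinv m (X i j).
Definition mc (m N n : nat) (X : 'M[rat]_n) := forall i j, cz m N (X i j).

Lemma mulE n (X Y : 'M[rat]_n.+1) i j : (X * Y) i j = \sum_k X i k * Y k j.
Proof. by rewrite -mulmxE mxE. Qed.

Lemma msubE n (X Y : 'M[rat]_n) i j : (X - Y) i j = X i j - Y i j.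
Proof. by rewrite !mxE. Qed.

Lemma maddE n (X Y : 'M[rat]_n) i j : (X + Y) i j = X i j + Y i j.
Proof. by rewrite !mxE. Qed.

Lemma add3E n (X Y Z : 'M[rat]_n) i j : (X + Y + Z) i j = X i j + Y i j + Z i j.
Proof. by rewrite !mxE. Qed.

Lemma oneE n (i j : 'I_n.+1) : (1 : 'M[rat]_n.+1) i j = (i == j)%:R.
Proof. by rewrite !mxE. Qed.

Section Mat.
Variables (m N n : nat).
Hypothesis m_gt0 : (0 < m)%N.
Local Hint Resolve m_gt0 : core.
Local Notation M := ('M[rat]_n.+1).

Lemma mZ_mul (X Y : M) : mZ m X -> mZ m Y -> mZ m (X * Y).
Proof. move=> hX hY i j; rewrite mulE; apply: Zm_sum => // k _; exact: Zm_mul. Qed.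

Lemma mZ1 : mZ m (1 : M).
Proof. move=> i j; rewrite oneE; case: (i == j); [exact: Zm1|exact: Zm0]. Qed.

Lemma mZ_X (X : M) k : mZ m X -> mZ m (X ^+ k).
Proof. by move=> h; elim: k => [|k IH]; [rewrite expr0; exact: mZ1 | rewrite exprS; exact: mZ_mul]. Qed.

Lemma mZ_sub (X Y : M) : mZ m X -> mZ m Y -> mZ m (X - Y).
Proof. by move=> hX hY i j; rewrite !mxE; apply: Zm_sub. Qed.

Lemma mc_mull (X Y : M) : mZ m Y -> mc m N X -> mc m N (Y * X).
Proof. move=> hY hX i j; rewrite mulE; apply: cz_sum => // k _; exact: cz_mull. Qed.

Lemma mc_mulr (X Y : M) : mc m N X -> mZ m Y -> mc m N (X * Y).
Proof. move=> hX hY i j; rewrite mulE; apply: cz_sum => // k _; exact: cz_mulr. Qed.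

Lemma mc_add (X Y : M) : mc m N X -> mc m N Y -> mc m N (X + Y).
Proof. by move=> hX hY i j; rewrite !mxE; apply: cz_add. Qed.

Lemma mc_opp (X : M) : mc m N X -> mc m N (- X).
Proof. by move=> hX i j; rewrite !mxE; apply: cz_opp. Qed.

Lemma mc_dvd d (X : M) : (d %| N)%N -> (0 < N)%N -> mc m N X -> mc m d X.
Proof. by move=> h1 h2 h i j; apply: cz_dvd (h i j). Qed.

Definition cong1 (g : M) := mc m N (g - 1).

Lemma cong1_1 : cong1 1.
Proof. by move=> i j; rewrite subrr mxE; exact: cz0. Qed.

Lemma cong1_mul g h : cong1 g -> cong1 h -> mZ m h -> cong1 (g * h).
Proof.
move=> hg hh hZ; rewrite /cong1.
have -> : g * h - 1 = (g - 1) * h + (h - 1) by rewrite mulrBl mul1r addrA subrK.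
by apply: mc_add => //; apply: mc_mulr.
Qed.

Lemma cong1_X g k : cong1 g -> mZ m g -> cong1 (g ^+ k).
Proof.
move=> hg hZ; elim: k => [|k IH]; first by rewrite expr0; exact: cong1_1.
by rewrite exprSr; apply: cong1_mul.
Qed.

Lemma cong1_conj g X Y : cong1 g -> mZ m X -> mZ m Y -> X * Y = 1 -> cong1 (X * g * Y).
Proof.
move=> hg hX hY e; rewrite /cong1.
have -> : X * g * Y - 1 = X * (g - 1) * Y by rewrite mulrBr mulrBl mulr1 e.
by apply: mc_mulr => //; apply: mc_mull.
Qed.

Lemma cong1_V g : g \is a GRing.unit -> cong1 g -> mZ m g^-1 -> cong1 g^-1.
Proof.
move=> gu hg hZ; rewrite /cong1.
have -> : g^-1 - 1 = - (g^-1 * (g - 1)) by rewrite mulrBr mulVr // mulr1 opprB.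
by apply: mc_opp; apply: mc_mull.
Qed.

End Mat.

Lemma PoszX (a b : nat) : (a ^ b)%N%:Z = a%:Z ^+ b.
Proof. by elim: b => [|b IH]; rewrite ?expr0 // expnS exprS PoszM IH. Qed.

Lemma decomp (m x : nat) : (0 < m)%N -> (0 < x)%N ->
  exists x' P s, [/\ x = (x' * P)%N, coprime x' m & (P %| m ^ s)%N].
Proof.
move=> m0; elim: x {-2}x (leqnn x) => [|b IH] x hx x0; first by move: hx x0; case: x.
case cxm: (coprime x m); first by exists x, 1%N, 0%N; rewrite muln1 expn0.
set g := gcdn x m.
have g1 : (1 < g)%N.
  move: cxm; rewrite /coprime -/g; have : (0 < g)%N by rewrite gcdn_gt0 x0.
  by case: g => [|[|g]].
have gx : (g %| x)%N by apply: dvdn_gcdl.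
have gm : (g %| m)%N by apply: dvdn_gcdr.
set x1 := (x %/ g)%N.
have ex : x = (x1 * g)%N by rewrite /x1 divnK.
have x1p : (0 < x1)%N by move: x0; rewrite ex muln_gt0 => /andP[].
have x1b : (x1 <= b)%N.
  have : (x1 < x)%N by rewrite ex -{1}(muln1 x1) ltn_pmul2l.
  by move=> h; rewrite -ltnS (leq_trans h hx).
have [x' [P [s [e1 c1 d1]]]] := IH x1 x1b x1p.
exists x', (P * g)%N, s.+1; split => //.
  by rewrite ex e1 mulnA.
by rewrite expnSr dvdn_mul.
Qed.

Lemma order_lemma (m M k : nat) (sg : int) : (1 < m)%N -> (0 < M)%N ->
  (sg = 1 \/ sg = -1) ->
  (((m ^ M)%N.+1)%:Z %| (m ^ k)%N%:Z - sg)%Z -> (M %| k)%N.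
Proof.
move=> m1 M0 hsg /dvdzP[q hq].
set a := (k %/ M)%N; set b := (k %% M)%N.
have ek : k = (a * M + b)%N by rewrite /a /b -divn_eq.
set x : int := (m ^ M)%N%:Z.
have hmk : (m ^ k)%N%:Z = x ^+ a * (m ^ b)%N%:Z.
  by rewrite ek expnD [(a * M)%N]mulnC expnM PoszM /x !PoszX -exprM.
have [S hS] : exists S : int, x ^+ a - (-1) ^+ a = (x + 1) * S.
  by exists (\sum_(i < a) x ^+ (a.-1 - i) * (-1) ^+ i); rewrite subrXX opprK.
case b0: (b == 0%N).
  by apply/dvdnP; exists a; move/eqP: b0 => b0; rewrite ek b0 addn0.
have bpos : (0 < b)%N by rewrite lt0n b0.
have bM : (b < M)%N by rewrite /b ltn_mod.
set mb : int := (m ^ b)%N%:Z.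
have mb2 : 2 <= mb.
  rewrite /mb lez_nat; apply: (leq_trans m1); rewrite -{1}(expn1 m) leq_exp2l //.
have mbx : mb + 1 <= x.
  rewrite /mb /x -PoszD lez_nat addn1 ltn_exp2l //.
have N1e : ((m ^ M)%N.+1)%:Z = x + 1 by rewrite /x -addn1 PoszD.
rewrite N1e hmk in hq.
have he : ((-1) ^+ a = 1 :> int) \/ ((-1) ^+ a = -1 :> int).
  have sa : (-1) ^+ odd a = (-1) ^+ a :> int by rewrite signr_odd.
  by rewrite -sa; case: (odd a) => /=; [right|left]; rewrite ?expr1 ?expr0.
have key : (-1) ^+ a * mb - sg = (q - S * mb) * (x + 1).
  have : x ^+ a = (-1) ^+ a + (x + 1) * S by rewrite -hS addrC subrK.
  move=> hxa; move: hq; rewrite hxa => hq.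
  rewrite mulrBl -hq; ring.
exfalso.
set Q := q - S * mb in key.
have x1 : 0 < x + 1 by lia.
have [hq1|hq1] := lerP 1 Q.
  have : (x + 1) <= Q * (x + 1) by rewrite ler_peMl // ltW.
  by case: he => -> in key; case: hsg => -> in key; lia.
have [hq2|hq2] := lerP Q (-1).
  have : Q * (x + 1) <= - (x + 1).
    by rewrite -mulN1r ler_pM2r.
  by case: he => -> in key; case: hsg => -> in key; lia.
have : Q = 0 by lia.
move=> h0; rewrite h0 mul0r in key.
by case: he => -> in key; case: hsg => -> in key; lia.
Qed.

Lemma cz_intmul (m N : nat) (z : int) : (N%:Z %| z)%Z -> cz m N z%:~R.
Proof.
move=> /dvdzP[q ->]; rewrite /cz.
case N0 : (N == 0%N).
  by move/eqP: N0 => ->; rewrite invr0 mulr0; exact: Zm0.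
have hN : (N%:R : rat) != 0 by rewrite pnatr_eq0 N0.
rewrite rmorphM /= mulfK //; exact: Zm_int.
Qed.

Lemma Zm_res (m N : nat) (x : rat) : (0 < m)%N -> coprime N m -> inZinv m x ->
  exists w : int, cz m N (x - w%:~R).
Proof.
move=> m0 cNm [z [k ->]].
have : coprimez ((m ^ k)%N%:Z) (N%:Z) by rewrite coprimezE /= coprime_sym coprimeXr.
move=> /coprimezP[[u v] /= huv].
exists (z * u); rewrite /cz.
have hmk := mRX_neq0 m0 k.
have huvR : u%:~R * m%:R ^+ k + v%:~R * N%:R = 1 :> rat.
  by have := congr1 (fun t : int => t%:~R : rat) huv; rewrite rmorphD !rmorphM /= intr_natX.
case N0 : (N == 0%N).
  by move/eqP: N0 => ->; rewrite invr0 mulr0; exact: Zm0.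
have hN : (N%:R : rat) != 0 by rewrite pnatr_eq0 N0.
have -> : (z%:~R / m%:R ^+ k - (z * u)%:~R) / N%:R = (z * v)%:~R / m%:R ^+ k :> rat.
  rewrite !intrM.
  have -> : u%:~R = (1 - v%:~R * N%:R) / m%:R ^+ k :> rat.
    have e : u%:~R * m%:R ^+ k = 1 - v%:~R * N%:R :> rat by lra.
    by rewrite -e mulfK.
  by field; rewrite hmk hN.
by exists (z * v), k.
Qed.

From Stdlib Require Import ClassicalEpsilon.

Definition resz (m N : nat) (x : rat) : int :=
  epsilon (inhabits 0) (fun w : int => cz m N (x - w%:~R)).

Lemma resz_spec (m N : nat) (x : rat) : (0 < m)%N -> coprime N m -> inZinv m x ->
  cz m N (x - (resz m N x)%:~R).
Proof.
move=> m0 c hx; rewrite /resz; apply: (epsilon_spec (inhabits 0) (fun w : int => cz m N (x - w%:~R))); exact: Zm_res.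
Qed.

Section Order.
Variables (m N' n : nat).
Local Notation N := N'.+1.
Hypothesis m_gt0 : (0 < m)%N.
Hypothesis cNm : coprime N m.
Local Hint Resolve m_gt0 : core.
Local Notation M := ('M[rat]_n.+1).

Definition rcode (X : M) : {ffun 'I_n.+1 * 'I_n.+1 -> 'I_N} :=
  [ffun ij => inord `|(resz m N (X ij.1 ij.2) %% N%:Z)%Z|%N].

Lemma rcode_eq (X Y : M) : mZ m X -> mZ m Y -> rcode X = rcode Y -> mc m N (X - Y).
Proof.
move=> hX hY e i j.
have := congr1 (fun f : {ffun 'I_n.+1 * 'I_n.+1 -> 'I_N} => val (f (i, j))) e; rewrite /rcode !ffunE /=.
have hN : (N%:Z) != 0 by [].
have lt1 : forall r : int, (`|(r %% N%:Z)%Z|%N < N)%N.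
  move=> r; rewrite -ltz_nat gez0_abs ?modz_ge0 // ltz_pmod //.
rewrite !inordK ?lt1 // => /(congr1 Posz); rewrite !gez0_abs ?modz_ge0 // => /eqP.
rewrite eqz_mod_dvd => hd.
have h1 := resz_spec m_gt0 cNm (hX i j).
have h2 := resz_spec m_gt0 cNm (hY i j).
have -> : (X - Y) i j = (X i j - (resz m N (X i j))%:~R) - (Y i j - (resz m N (Y i j))%:~R)
    + (resz m N (X i j) - resz m N (Y i j))%:~R.
  by rewrite !mxE rmorphB /=; ring.
apply: cz_add => //; [exact: cz_sub | exact: cz_intmul].
Qed.

Lemma mat_order (X : M) : mZ m X -> mZ m X^-1 -> X \is a GRing.unit ->
  exists L, (0 < L)%N /\ cong1 m N (X ^+ L).
Proof.
move=> hX hXi Xu.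
set K := #|{ffun 'I_n.+1 * 'I_n.+1 -> 'I_N}|.
pose f := fun q : 'I_K.+1 => rcode (X ^+ q).
have : ~~ injectiveb f.
  apply/negP => /injectiveP inj; have := leq_card f inj.
  by rewrite card_ord ltnn.
move=> /injectivePn [q1 [q2 hne hf]].
have key : forall a b : nat, (a < b)%N -> mc m N (X ^+ a - X ^+ b) ->
    exists L, (0 < L)%N /\ cong1 m N (X ^+ L).
  move=> a b ab hab; exists (b - a)%N; split; first by rewrite subn_gt0.
  rewrite /cong1.
  have -> : X ^+ (b - a) - 1 = - ((X^-1) ^+ a * (X ^+ a - X ^+ b)).
    rewrite -{2}(subnKC (ltnW ab)) exprD mulrBr exprVn mulVr ?unitrX //.
    by rewrite mulrA mulVr ?unitrX // mul1r opprB.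
  apply: mc_opp => //; apply: mc_mull => //; exact: mZ_X.
have hab := rcode_eq (mZ_X m_gt0 q1 hX) (mZ_X m_gt0 q2 hX) hf.
case: (ltngtP q1 q2) => h.
- exact: key h hab.
- apply: key h _. have -> : X ^+ q2 - X ^+ q1 = - (X ^+ q1 - X ^+ q2) by rewrite opprB.
  exact: mc_opp.
- by move: hne; rewrite (val_inj h) eqxx.
Qed.

End Order.

(* ---------- affine model: a^2 <> 1 in BS(1,m) ---------- *)
Section Aff.
Variable m : nat.
Hypothesis m_gt0 : (0 < m)%N.

Definition compA (a b : rat * rat) : rat * rat := (a.1 * b.1, a.1 * b.2 + a.2).

Definition affl (x : bool * bool) : rat * rat :=
  match x with
  | (false, false) => (1, 1)
  | (false, true) => (1, -1)
  | (true, false) => (m%:R, 0)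
  | (true, true) => (m%:R^-1, 0)
  end.

Definition ev (w : bsword) : rat * rat := foldr (fun x acc => compA (affl x) acc) (1, 0) w.

Lemma compA_assoc a b c : compA a (compA b c) = compA (compA a b) c.
Proof. by case: a b c => [s1 b1] [s2 b2] [s3 b3]; rewrite /compA /=; congr pair; ring. Qed.

Lemma compA1 a : compA (1, 0) a = a.
Proof. by case: a => s b; rewrite /compA /= !mul1r addr0. Qed.

Lemma ev_cat u v : ev (u ++ v) = compA (ev u) (ev v).
Proof. by elim: u => [|x u IH] /=; [rewrite compA1 | rewrite IH compA_assoc]. Qed.

Lemma ev_nseq k : ev (nseq k la) = (1, k%:R).
Proof.
elim: k => [|k IH] //=; rewrite IH /compA /=; congr pair.
by rewrite mul1r -addn1 natrD.
Qed.

Lemma ev_rule x y : bs_rule m x y -> ev x = ev y.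
Proof.
have hm : (m%:R : rat) != 0 by rewrite pnatr_eq0 -lt0n.
case=> [[g [-> ->]]|[[g [-> ->]]|[-> ->]]]; last first.
  rewrite ev_nseq /= /compA /=; congr pair; field; exact: hm.
all: case: g; rewrite /= /compA /=; congr pair; field; exact: hm.
Qed.

Lemma ev_step u v : bs_step m u v -> ev u = ev v.
Proof. by case=> [p [s [x [y [hr [-> ->]]]]]]; rewrite !ev_cat (ev_rule hr). Qed.

Lemma ev_eq u v : bs_eq m u v -> ev u = ev v.
Proof.
elim=> [x y h|x|x y _ IH|x y z _ IH1 _ IH2]; first exact: ev_step.
- by [].
- by [].
- by rewrite IH1.
Qed.

Lemma aa_neq1 : ~ bs_eq m [:: la; la] [::].
Proof.
move=> /ev_eq; rewrite /= /compA /= => h; have := congr1 snd h => /=.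
by rewrite mulr0 add0r !mulr1; lra.
Qed.

End Aff.

Lemma conj_exprn (R : unitRingType) (V X : R) (j : nat) : V \is a GRing.unit ->
  V * X ^+ j * V^-1 = (V * X * V^-1) ^+ j.
Proof.
move=> Vu; elim: j => [|j IH]; first by rewrite !expr0 mulr1 divrr.
by rewrite [RHS]exprSr -IH !mulrA divrK // exprSr mulrA.
Qed.

Lemma conj_exprz (R : unitRingType) (V X : R) (z : int) :
  V \is a GRing.unit -> X \is a GRing.unit ->
  V * X ^ z * V^-1 = (V * X * V^-1) ^ z.
Proof.
move=> Vu Xu; case: z => j.
  by rewrite -!exprnP conj_exprn.
rewrite NegzE -!exprnN -conj_exprn //.
have Xju : X ^+ j.+1 \is a GRing.unit by rewrite unitrX.
have u1 : V * X ^+ j.+1 \is a GRing.unit by rewrite unitrMr.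
by rewrite (invrM u1) ?unitrV // invrK (invrM Vu Xju) mulrA.
Qed.

Lemma comm_exprn (R : ringType) (a b c : R) (j : nat) : a * b = c * a -> a * b ^+ j = c ^+ j * a.
Proof.
move=> e; elim: j => [|j IH]; first by rewrite !expr0 mulr1 mul1r.
by rewrite exprSr mulrA IH -mulrA e mulrA -exprSr.
Qed.

Lemma sq1 (y : rat) : y ^+ 2 = 1 -> y = 1 \/ y = -1.
Proof.
move=> h; have : (y - 1) * (y + 1) = 0 by rewrite mulrDr mulr1 mulrBl mul1r -expr2 h; ring.
move/eqP; rewrite mulf_eq0 => /orP[] /eqP e; [left|right]; lra.
Qed.

Lemma sq1z (y : rat) (z : int) : y ^+ 2 = 1 -> (y ^ z) ^+ 2 = 1.
Proof. by move=> h; rewrite exprnP exprzAC -exprnP h exp1rz. Qed.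

Section UT.
Variable n : nat.
Local Notation M := ('M[rat]_n.+1).

Lemma ut1 : upper_tri (1 : M).
Proof. by move=> i j ji; rewrite oneE; case: eqP => // e; move: ji; rewrite e ltnn. Qed.

Lemma ut_mul (X Y : M) : upper_tri X -> upper_tri Y -> upper_tri (X * Y).
Proof.
move=> hX hY i j ji; rewrite mulE big1 // => k _.
case: (ltnP k i) => ki; first by rewrite hX // mul0r.
by rewrite hY ?mulr0 // (leq_trans ji ki).
Qed.

Lemma ut_X (X : M) k : upper_tri X -> upper_tri (X ^+ k).
Proof. by move=> h; elim: k => [|k IH]; [rewrite expr0; exact: ut1 | rewrite exprS; exact: ut_mul]. Qed.

Lemma diag_mul (X Y : M) i : upper_tri X -> upper_tri Y -> (X * Y) i i = X i i * Y i i.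
Proof.
move=> hX hY; rewrite mulE (bigD1 i) //= big1 ?addr0 // => k ki.
case: (ltngtP k i) => h.
- by rewrite hX // mul0r.
- by rewrite hY // mulr0.
- by move: ki; rewrite (val_inj h) eqxx.
Qed.

Lemma diag_X (X : M) i k : upper_tri X -> (X ^+ k) i i = X i i ^+ k.
Proof.
move=> h; elim: k => [|k IH]; first by rewrite !expr0 oneE eqxx.
by rewrite !exprS diag_mul ?IH //; exact: ut_X.
Qed.

Lemma diag_inv (X : M) i : upper_tri X -> upper_tri X^-1 -> X \is a GRing.unit ->
  X^-1 i i = (X i i)^-1 /\ X i i != 0.
Proof.
move=> h1 h2 u.
have e : X i i * X^-1 i i = 1 by rewrite -diag_mul // mulrV // oneE eqxx.
have nz : X i i != 0 by apply/eqP => e0; move: e; rewrite e0 mul0r => /eqP; rewrite eq_sym oner_eq0.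
split => //; apply: (mulfI nz); by rewrite e mulfV.
Qed.

Lemma ut_exprz (X : M) (z : int) : upper_tri X -> upper_tri X^-1 -> upper_tri (X ^ z).
Proof.
move=> h1 h2; case: z => j; first by rewrite -exprnP; exact: ut_X.
by rewrite NegzE -exprnN -exprVn; exact: ut_X.
Qed.

Lemma diag_exprz (X : M) (z : int) i : upper_tri X -> upper_tri X^-1 -> X \is a GRing.unit ->
  (X ^ z) i i = (X i i) ^ z.
Proof.
move=> h1 h2 u; case: z => j; first by rewrite -!exprnP diag_X.
rewrite NegzE -!exprnN -exprVn diag_X // (diag_inv i h1 h2 u).1.
by rewrite exprVn.
Qed.

End UT.

Section BS.
Variables (m n : nat) (rho : bsword -> 'M[rat]_n.+1).
Hypotheses (hm : (2 <= m)%N) (hom : bs_hom m rho) (hT : forall w, in_Tn m (rho w))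
  (hinj : bs_injective m rho).

Fact m_gt0 : (0 < m)%N. Proof. exact: leq_trans hm. Qed.
Local Hint Resolve m_gt0 : core.

Lemma rho_nil : rho [::] = 1.
Proof. by case: hom => h _ _; rewrite h idmxE. Qed.

Lemma rho_cat u v : rho (u ++ v) = rho u * rho v.
Proof. by case: hom => _ h _; rewrite h mulmxE. Qed.

Lemma rho_eq u v : bs_eq m u v -> rho u = rho v.
Proof. by case: hom => _ _ h; apply: h. Qed.

Lemma rho_unit w : rho w \is a GRing.unit.
Proof. by case: (hT w). Qed.

Lemma rho_mZ w : mZ m (rho w).
Proof. by case: (hT w). Qed.

Lemma rho_mZV w : mZ m (rho w)^-1.
Proof. by case: (hT w). Qed.

Lemma rho_ut w : upper_tri (rho w).
Proof. by case: (hT w). Qed.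


Lemma rule_eq x y : bs_rule m x y -> bs_eq m x y.
Proof.
move=> h; apply: rst_step; exists [::], [::], x, y; split => //.
by rewrite /= !cats0.
Qed.

Definition A := rho [:: la].
Definition T := rho [:: lt].

Lemma Au : A \is a GRing.unit. Proof. exact: rho_unit. Qed.
Lemma Tu : T \is a GRing.unit. Proof. exact: rho_unit. Qed.
Local Hint Resolve Au Tu : core.

Lemma inv_uniq (X Y : 'M[rat]_n.+1) : X \is a GRing.unit -> X * Y = 1 -> Y = X^-1.
Proof. by move=> u e; rewrite -[Y](mulKr u) e mulr1. Qed.

Lemma rho_laI : rho [:: laI] = A^-1.
Proof.
apply: inv_uniq => //; rewrite /A -rho_cat -rho_nil; apply: rho_eq; apply: rule_eq.
by left; exists false.
Qed.

Lemma rho_ltI : rho [:: ltI] = T^-1.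
Proof.
apply: inv_uniq => //; rewrite /T -rho_cat -rho_nil; apply: rho_eq; apply: rule_eq.
by left; exists true.
Qed.

Definition flip (x : bool * bool) : bool * bool := (x.1, ~~ x.2).
Definition winv (w : bsword) : bsword := foldr (fun x acc => acc ++ [:: flip x]) [::] w.

Lemma rho_flip x : rho [:: flip x] = (rho [:: x])^-1.
Proof.
have e1 : rho [:: (true, true)] = T^-1 by exact: rho_ltI.
have e2 : rho [:: (false, true)] = A^-1 by exact: rho_laI.
case: x => [[] []] /=; rewrite ?e1 ?e2 ?invrK //.
Qed.

Lemma rho_winv w : rho (winv w) = (rho w)^-1.
Proof.
elim: w => [|x w IH] /=; first by rewrite rho_nil invr1.
by rewrite rho_cat IH rho_flip (_ : x :: w = [:: x] ++ w) // rho_cat invrM ?rho_unit.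
Qed.

Lemma rho_utV w : upper_tri (rho w)^-1.
Proof. by rewrite -rho_winv; exact: rho_ut. Qed.

Lemma rho_nseq k x : rho (nseq k x) = rho [:: x] ^+ k.
Proof.
elim: k => [|k IH]; first by rewrite rho_nil expr0.
by rewrite exprS -IH -rho_cat.
Qed.

Lemma TAT : T * A * T^-1 = A ^+ m.
Proof.
rewrite -rho_ltI /A -rho_nseq -!rho_cat; apply: rho_eq; apply: rule_eq.
by right; right.
Qed.

Lemma TA : T * A = A ^+ m * T.
Proof. by rewrite -TAT divrK. Qed.

Lemma KC p : T ^+ p * A * (T ^+ p)^-1 = A ^+ (m ^ p).
Proof.
elim: p => [|p IH]; first by rewrite expr0 invr1 mul1r mulr1 expn0 expr1.
have Tpu : T ^+ p \is a GRing.unit by rewrite unitrX.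
rewrite exprS invrM // !mulrA -(mulrA _ _ A) -(mulrA _ (T ^+ p * A)) IH.
rewrite conj_exprn // TAT -exprM expnS.
by [].
Qed.

Lemma KCz p (z : int) : T ^+ p * A ^ z * (T ^+ p)^-1 = A ^ ((m ^ p)%N%:Z * z).
Proof.
rewrite conj_exprz ?unitrX // KC exprnP exprz_exp //.
Qed.

Definition zword (z : int) : bsword :=
  match z with Posz j => nseq j la | Negz j => nseq j.+1 laI end.

Lemma rho_zword z : rho (zword z) = A ^ z.
Proof.
case: z => j; rewrite /zword; first by rewrite rho_nseq -exprnP.
by rewrite rho_nseq rho_laI NegzE -exprnN exprVn.
Qed.

Definition nfm p (z : int) q := (T ^+ p)^-1 * A ^ z * T ^+ q.

Lemma nf_G p z q : exists w, nfm p z q = rho w.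
Proof.
exists (nseq p ltI ++ zword z ++ nseq q lt).
by rewrite !rho_cat !rho_nseq rho_zword rho_ltI -/T exprVn mulrA.
Qed.

Lemma TinvX_G p : exists w, (T ^+ p)^-1 = rho w.
Proof. by exists (nseq p ltI); rewrite rho_nseq rho_ltI exprVn. Qed.

Lemma TX_G p : exists w, T ^+ p = rho w.
Proof. by exists (nseq p lt); rewrite rho_nseq. Qed.

Lemma Az_G z : exists w, A ^ z = rho w.
Proof. by exists (zword z); rewrite rho_zword. Qed.

Lemma A_conj p : A = (T ^+ p)^-1 * A ^+ (m ^ p) * T ^+ p.
Proof.
have Tpu : T ^+ p \is a GRing.unit by rewrite unitrX.
by rewrite -KC !mulrA mulVr // mul1r divrK.
Qed.

Lemma Aez p (e : int) : A ^ e = (T ^+ p)^-1 * A ^ ((m ^ p)%N%:Z * e) * T ^+ p.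
Proof.
have Tpu : T ^+ p \is a GRing.unit by rewrite unitrX.
have u1 : (T ^+ p)^-1 \is a GRing.unit by rewrite unitrV.
have u2 : A ^+ (m ^ p) \is a GRing.unit by rewrite unitrX.
have h := @conj_exprz _ (T ^+ p)^-1 (A ^+ (m ^ p)) e u1 u2.
rewrite invrK -A_conj in h.
by rewrite -h (exprnP A (m ^ p)) exprz_exp.
Qed.

Lemma G_nf w : exists p q z, rho w = nfm p z q.
Proof.
elim: w => [|x w [p [q [z IH]]]].
  by exists 0%N, 0%N, 0; rewrite rho_nil /nfm !expr0 expr0z invr1 !mul1r.
have Tpu : T ^+ p \is a GRing.unit by rewrite unitrX.
rewrite -cat1s rho_cat IH /nfm.
case: x => [[] []].
-
  exists p.+1, q, z; rewrite rho_ltI -/T exprSr invrM // !mulrA.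
  by [].
-
  case: p Tpu IH => [|p] Tpu IH.
    exists 0%N, q.+1, ((m ^ 1)%N%:Z * z).
    rewrite -/T expr0 invr1 !mul1r -(KCz 1 z) expr1 exprS !mulrA divrK //.
  exists p, q, z; rewrite -/T exprSr invrM ?unitrX // !mulrA mulrV // mul1r.
  by [].
-
  exists p, q, ((m ^ p)%N%:Z * (-1) + z).
  by rewrite rho_laI -/A -exprN1 (Aez p) !mulrA mulrK ?unitrX // exprzDr // !mulrA.
-
  exists p, q, ((m ^ p)%N%:Z * 1 + z).
  by rewrite -/A -{1}(expr1z A) (Aez p) !mulrA mulrK ?unitrX // exprzDr // !mulrA.
Qed.


Lemma Tdiag_nz i : T i i != 0.
Proof. by have [_ ->] := diag_inv i (rho_ut [:: lt]) (rho_utV [:: lt]) Tu. Qed.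

Lemma Adiag_nz i : A i i != 0.
Proof. by have [_ ->] := diag_inv i (rho_ut [:: la]) (rho_utV [:: la]) Au. Qed.

Lemma utA : upper_tri A. Proof. exact: rho_ut. Qed.
Lemma utT : upper_tri T. Proof. exact: rho_ut. Qed.
Lemma utAV : upper_tri A^-1. Proof. exact: rho_utV. Qed.
Lemma utTV : upper_tri T^-1. Proof. exact: rho_utV. Qed.

Lemma mu_sq i : A i i ^+ 2 = 1.
Proof.
have e : (T * A) i i = (A ^+ m * T) i i by rewrite TA.
rewrite (diag_mul i utT utA) (diag_mul i (ut_X m utA) utT) (diag_X i m utA) in e.
have e2 : A i i ^+ m = A i i.
  by apply: (mulIf (Tdiag_nz i)); rewrite -e mulrC.
have e3 : A i i ^+ m.-1 = 1.
  apply: (mulIf (Adiag_nz i)); rewrite mul1r -exprSr prednK //; exact: m_gt0.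
have e4 : `|A i i| = 1.
  apply/eqP; rewrite -(@pexpr_eq1 _ _ m.-1) ?normr_ge0 //; last by rewrite -ltnS prednK //; exact: m_gt0.
  by rewrite -normrX e3 normr1.
by rewrite -real_normK ?num_real // e4 expr1n.
Qed.

Definition U := A ^+ 2.
Definition Y := U - 1.

Lemma U_neq1 : U != 1.
Proof.
apply/eqP => e.
have : rho [:: la; la] = rho [::].
  by rewrite rho_nil -e /U expr2 (_ : [:: la; la] = [:: la] ++ [:: la]) // rho_cat.
move=> /hinj; exact: aa_neq1.
Qed.

Lemma utU : upper_tri U. Proof. exact: ut_X utA. Qed.

Lemma Y_low (k l : 'I_n.+1) : (l <= k)%N -> Y k l = 0.
Proof.
rewrite leq_eqVlt => /orP[/eqP e|lk].
  have -> : l = k by apply: val_inj.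
  by rewrite /Y msubE oneE /U (diag_X _ _ utA) mu_sq eqxx subrr.
have kl : (k == l) = false by apply/negbTE; apply/eqP => e; move: lk; rewrite e ltnn.
by rewrite /Y msubE oneE utU // kl subrr.
Qed.

Lemma Y_mZ : mZ m Y.
Proof.
apply: mZ_sub => //; last exact: mZ1.
rewrite /U expr2; apply: mZ_mul => //; exact: rho_mZ.
Qed.

Definition gap (X : 'M[rat]_n.+1) (d : nat) := forall k l : 'I_n.+1, (l - k < d)%N -> X k l = 0.

Lemma pair_sel : exists (i j : 'I_n.+1) (d : nat),
  [/\ Y i j != 0, (j - i)%N = d, (0 < d)%N & gap Y d].
Proof.
have hY : Y != 0 by rewrite /Y subr_eq0 U_neq1.
have : [exists ij : 'I_n.+1 * 'I_n.+1, Y ij.1 ij.2 != 0].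
  apply: contraR hY => /existsPn h; apply/eqP/matrixP => k l; rewrite [RHS]mxE.
  by move: (h (k, l)); rewrite negbK => /eqP.
case/existsP => [[i0 j0] /= h0].
pose P := fun d => [exists ij : 'I_n.+1 * 'I_n.+1, (Y ij.1 ij.2 != 0) && ((ij.2 - ij.1)%N == d)].
have exP : exists d, P d by exists (j0 - i0)%N; apply/existsP; exists (i0, j0); rewrite /= h0 eqxx.
case: (ex_minnP exP) => d Pd dmin.
case/existsP: Pd => [[i j]] /= /andP[h /eqP e].
exists i, j, d; split => //.
  rewrite -e subn_gt0 ltnNge; apply/negP => ji; move: h; by rewrite Y_low // eqxx.
move=> k l lk; apply/eqP; apply: contraTT lk => hk; rewrite -leqNgt; apply: dmin.
by apply/existsP; exists (k, l); rewrite /= hk eqxx.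
Qed.


Lemma gap_mul (X Z : 'M[rat]_n.+1) d : (0 < d)%N -> gap X d -> gap Z d ->
  forall k l : 'I_n.+1, (l - k < d + d)%N -> (X * Z) k l = 0.
Proof.
move=> d0 hX hZ k l lk; rewrite mulE big1 // => o _.
case: (ltnP (o - k) d) => h1; first by rewrite hX // mul0r.
by rewrite hZ ?mulr0 //; lia.
Qed.

Section Pair.
Variables (i j : 'I_n.+1) (d : nat).
Hypotheses (hc : Y i j != 0) (hd : (j - i)%N = d) (d0 : (0 < d)%N) (gY : gap Y d).

Lemma Upow y : gap (U ^+ y - 1) d /\ (U ^+ y - 1) i j = y%:R * Y i j.
Proof.
elim: y => [|y [g1 e1]].
  by rewrite expr0 subrr; split => [k l _|]; rewrite mxE ?mul0r.
have e : U ^+ y.+1 - 1 = (U ^+ y - 1) * Y + (U ^+ y - 1) + Y.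
  rewrite /Y mulrBr mulr1 subrK mulrBl mul1r -exprSr addrA subrK //.
rewrite e; split.
  move=> k l lk; rewrite add3E gY // g1 // (gap_mul d0 g1 gY) ?addr0 //; lia.
rewrite add3E e1 (gap_mul d0 g1 gY); last by lia.
by rewrite -[y.+1]addn1 natrD mulrDl mul1r add0r.
Qed.

Lemma TY : (T * Y) i j = T i i * Y i j.
Proof.
rewrite mulE (bigD1 i) //= big1 ?addr0 // => o oi.
case: (ltngtP o i) => h.
- by rewrite utT // mul0r.
- by rewrite gY ?mulr0 //; lia.
- by move: oi; rewrite (val_inj h) eqxx.
Qed.

Lemma ZT (Z : 'M[rat]_n.+1) : gap Z d -> (Z * T) i j = Z i j * T j j.
Proof.
move=> gZ; rewrite mulE (bigD1 j) //= big1 ?addr0 // => o oj.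
case: (ltngtP o j) => h.
- by rewrite gZ ?mul0r //; lia.
- by rewrite utT // mulr0.
- by move: oj; rewrite (val_inj h) eqxx.
Qed.

Lemma lam_rel : T i i = m%:R * T j j.
Proof.
have TU : T * U = U ^+ m * T by rewrite /U (comm_exprn 2 TA) exprAC.
have eU : U = Y + 1 by rewrite /Y subrK.
have [g1 e1] := Upow m.
have eUm : U ^+ m = (U ^+ m - 1) + 1 by rewrite subrK.
have h : (T * U) i j = (U ^+ m * T) i j by rewrite TU.
rewrite {1}eU eUm mulrDr mulrDl mulr1 mul1r !maddE TY (ZT g1) e1 in h.
move/addIr: h => h.
apply: (mulIf hc); rewrite h; ring.
Qed.

End Pair.

Definition Gset := bs_image rho.

Lemma G_mul g h : Gset g -> Gset h -> Gset (g * h).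
Proof. by move=> [u ->] [v ->]; exists (u ++ v); rewrite rho_cat. Qed.

Lemma G_X g k : Gset g -> Gset (g ^+ k).
Proof.
move=> hg; elim: k => [|k IH]; first by exists [::]; rewrite rho_nil expr0.
by rewrite exprS; apply: G_mul.
Qed.

Lemma G_unit g : Gset g -> g \is a GRing.unit.
Proof. by move=> [u ->]; exact: rho_unit. Qed.

Lemma H_X (H : 'M[rat]_n.+1 -> Prop) g k : is_subgroup_of Gset H -> H g -> H (g ^+ k).
Proof.
move=> [_ h1 hM _] hg; elim: k => [|k IH]; first by rewrite expr0.
by rewrite exprS; apply: hM.
Qed.

Lemma H_pow (H : 'M[rat]_n.+1 -> Prop) : is_subgroup_of Gset H -> finite_index_in Gset H ->
  exists D, (0 < D)%N /\ forall g, Gset g -> H (g ^+ D).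
Proof.
move=> Hs [s [hs1 hs2]].
have hsub := Hs; case: Hs => [HG H1 HM HV].
case: (hs2 1 (ex_intro _ [::] (esym rho_nil))) => g0 g0s _.
set r := size s.
have r0 : (0 < r)%N by rewrite /r; case: (s) g0s.
exists r`!; split; first exact: fact_gt0.
move=> g Gg.
pose P := fun k : nat => fun g0 : 'M[rat]_n.+1 => g0 \in s /\ exists2 h, H h & g ^+ k = g0 *m h.
have exP : forall k, exists g0, P k g0.
  by move=> k; case: (hs2 _ (G_X k Gg)) => g1 g1s [h Hh e]; exists g1; split => //; exists h.
pose pick := fun k => epsilon (inhabits 1) (P k).
have pickP : forall k, P k (pick k) by move=> k; apply: epsilon_spec.
pose f := fun k : 'I_r.+1 => (inord (index (pick k) s) : 'I_r.-1.+1).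
have : ~~ injectiveb f.
  apply/negP => /injectiveP inj; have := leq_card f inj.
  by rewrite !card_ord prednK // ltnn.
move=> /injectivePn [k1 [k2 hne hf]].
have key : forall a b : nat, (a < b <= r)%N -> pick a = pick b -> H (g ^+ r`!).
  move=> a b /andP[ab br] e.
  have [ia [h1 Hh1 e1]] := pickP a; have [g0in [h2 Hh2 e2]] := pickP b.
  rewrite -e in e2; rewrite mulmxE in e1 e2.
  have u0 : pick a \is a GRing.unit by apply: G_unit; apply: hs1 ia.
  have u1 : h1 \is a GRing.unit by apply: G_unit; apply: HG Hh1.
  have hb : g ^+ b = g ^+ a * g ^+ (b - a) by rewrite -exprD subnKC // ltnW.
  have e3 : g ^+ (b - a) = h1^-1 * h2.
    have : pick a * h1 * g ^+ (b - a) = pick a * h2 by rewrite -e1 -hb e2.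
    rewrite -mulrA => /(mulrI u0) e4; by rewrite -e4 mulKr.
  have Hd : H (g ^+ (b - a)) by rewrite e3 -mulmxE; apply: HM => //; exact: (HV _ Hh1).
  have dv : ((b - a) %| r`!)%N by apply: dvdn_fact; rewrite subn_gt0 ab /= (leq_trans (leq_subr _ _) br).
  by rewrite -(divnK dv) mulnC exprM; apply: H_X.
have idx : forall k : 'I_r.+1, f k = index (pick k) s :> nat.
  move=> k; rewrite /f inordK // prednK // index_mem; by case: (pickP k).
have ep : pick k1 = pick k2.
  have [i1 _] := pickP k1; have [i2 _] := pickP k2.
  by rewrite -(nth_index 1 i1) -(nth_index 1 i2) -!idx hf.
case: (ltngtP k1 k2) => h.
- by apply: (key k1 k2) => //; rewrite h /= -ltnS.
- by apply: (key k2 k1) => //; rewrite h /= -ltnS.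
- by move: hne; rewrite (val_inj h) eqxx.
Qed.

Lemma nfm_pow p w D : (nfm p w p) ^+ D = nfm p (w * D%:Z) p.
Proof.
have Vu : (T ^+ p)^-1 \is a GRing.unit by rewrite unitrV unitrX.
rewrite /nfm -{2}(invrK (T ^+ p)) -conj_exprn //.
by rewrite invrK exprnP exprz_exp.
Qed.

Lemma nfm_shift p s z : nfm (p + s) (z * (m ^ s)%N%:Z) (p + s) = nfm p z p.
Proof.
have Tpu : T ^+ p \is a GRing.unit by rewrite unitrX.
have Tsu : T ^+ s \is a GRing.unit by rewrite unitrX.
by rewrite /nfm (mulrC z) -(KCz s z) addnC exprD invrM // !mulrA !divrK.
Qed.

Lemma nfm_TX p z k : nfm p z p * T ^+ k = nfm p z (p + k).
Proof. by rewrite /nfm -mulrA -exprD. Qed.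

Lemma nfm_TV q z k : nfm (q + k) z (q + k) * (T ^+ k)^-1 = nfm (q + k) z q.
Proof.
have Tku : T ^+ k \is a GRing.unit by rewrite unitrX.
by rewrite /nfm -mulrA exprD mulrK.
Qed.

Lemma ut_TV p : upper_tri (T ^+ p)^-1.
Proof. by case: (TinvX_G p) => w ->; exact: rho_ut. Qed.

Lemma mZ_TV p : mZ m (T ^+ p)^-1.
Proof. by case: (TinvX_G p) => w ->; exact: rho_mZ. Qed.

Lemma mZ_T p : mZ m (T ^+ p).
Proof. by case: (TX_G p) => w ->; exact: rho_mZ. Qed.

Lemma diag_nfm p z q i :
  (nfm p z q) i i = (T i i ^+ p)^-1 * (A i i) ^ z * T i i ^+ q.
Proof.
have Tpu : T ^+ p \is a GRing.unit by rewrite unitrX.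
have uz : upper_tri (A ^ z) by apply: ut_exprz; [exact: utA | exact: utAV].
rewrite /nfm (diag_mul i (ut_mul (ut_TV p) uz) (ut_X q utT)).
rewrite (diag_mul i (ut_TV p) uz) (diag_X i q utT) (diag_exprz z i utA utAV Au).
by rewrite (diag_inv i (ut_X p utT) (ut_TV p) Tpu).1 (diag_X i p utT).
Qed.

Lemma diag_rel (li lj mi mj mm : rat) (p q : nat) (z : int) :
  lj != 0 -> mm != 0 -> li = mm * lj -> mi ^+ 2 = 1 -> mj ^+ 2 = 1 ->
  ((p <= q)%N -> (li ^+ p)^-1 * mi ^ z * li ^+ q =
      (mi * mj) ^ z * mm ^+ (q - p) * ((lj ^+ p)^-1 * mj ^ z * lj ^+ q)) /\
  ((q < p)%N -> (lj ^+ p)^-1 * mj ^ z * lj ^+ q =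
      (mi * mj) ^ z * mm ^+ (p - q) * ((li ^+ p)^-1 * mi ^ z * li ^+ q)).
Proof.
move=> hlj hmm hli hmi hmj.
have ha := sq1z z hmi; have hb := sq1z z hmj.
rewrite expfzMl; set a := mi ^ z; set b := mj ^ z.
split => h.
  have [k ->] : exists k, q = (p + k)%N by exists (q - p)%N; rewrite subnKC.
  rewrite addKn.
  transitivity (b ^+ 2 * ((li ^+ p)^-1 * a * li ^+ (p + k))); first by rewrite hb mul1r.
  rewrite hli !exprD !exprMn; field.
  by rewrite ?expf_neq0 ?mulf_neq0 ?hlj ?hmm.
have [k ->] : exists k, p = (q + k)%N by exists (p - q)%N; rewrite subnKC // ltnW.
rewrite addKn.
transitivity (a ^+ 2 * ((lj ^+ (q + k))^-1 * b * lj ^+ q)); first by rewrite ha mul1r.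
rewrite hli !exprD !exprMn; field.
by rewrite ?expf_neq0 ?mulf_neq0 ?hlj ?hmm.
Qed.

Lemma sig_int (s : rat) : s = 1 \/ s = -1 -> exists sg : int, s = sg%:~R /\ (sg = 1 \/ sg = -1).
Proof. by case=> ->; [exists 1 | exists (-1)]; split; auto. Qed.

Lemma diag_div (Nn M k : nat) (gi gj s : rat) : (1 < m)%N -> (0 < M)%N -> (0 < Nn)%N ->
  coprime ((m ^ M).+1 * Nn) m ->
  (s = 1 \/ s = -1) -> gi = s * m%:R ^+ k * gj ->
  cz m ((m ^ M).+1 * Nn) (gi - 1) -> cz m ((m ^ M).+1 * Nn) (gj - 1) -> (M %| k)%N.
Proof.
move=> m1 M0 Nn0 cop hs e hi hj.
have m0 : (0 < m)%N by apply: leq_trans m1.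
set N := ((m ^ M).+1 * Nn)%N in cop hi hj.
have [sg [esg hsg]] := sig_int hs.
have hZs : inZinv m (s * m%:R ^+ k) by rewrite esg; apply: Zm_mul => //; [exact: Zm_int | exact: Zm_mX].
have h1 : cz m N (s * m%:R ^+ k - 1).
  have -> : s * m%:R ^+ k - 1 = (gi - 1) - s * m%:R ^+ k * (gj - 1) by rewrite e; ring.
  by apply: cz_sub => //; apply: cz_mull.
have N0 : (0 < N)%N by rewrite muln_gt0 Nn0.
have h2 : cz m (m ^ M).+1 (s * m%:R ^+ k - 1) by apply: cz_dvd h1 => //; exact: dvdn_mulr.
have cop1 : coprime (m ^ M).+1 m by move: cop; rewrite coprimeMl => /andP[].
have h3 : ((m ^ M).+1%:Z %| sg * (m ^ k)%N%:Z - 1)%Z.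
  apply: cz_int => //.
  by move: h2; rewrite esg -intr_natX -intrM -[1]/(1%:~R) -intrB.
apply: (@order_lemma m M k sg m1 M0 hsg).
have -> : (m ^ k)%N%:Z - sg = sg * (sg * (m ^ k)%N%:Z - 1).
  by case: hsg => ->; ring.
exact: dvdz_mull.
Qed.

Lemma stepb N2' p q z L : cong1 m N2'.+1 (T ^+ L) ->
  (((p <= q)%N /\ (L %| q - p)%N) \/ ((q < p)%N /\ (L %| p - q)%N)) ->
  cong1 m N2'.+1 (nfm p z q) -> cong1 m N2'.+1 (A ^ z).
Proof.
move=> hL hcase hg.
have Tpu : T ^+ p \is a GRing.unit by rewrite unitrX.
have hTk : forall k, (L %| k)%N -> cong1 m N2'.+1 (T ^+ k).
  move=> k /dvdnP[a ->]; rewrite mulnC exprM; apply: cong1_X => //; exact: mZ_T.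
have h : cong1 m N2'.+1 (T ^+ p * nfm p z q * (T ^+ p)^-1).
  apply: cong1_conj => //; [exact: mZ_T | exact: mZ_TV | exact: mulrV].
have eh : T ^+ p * nfm p z q * (T ^+ p)^-1 = A ^ z * (T ^+ q * (T ^+ p)^-1).
  by rewrite /nfm !mulrA mulrV // mul1r.
rewrite eh in h.
have [Wi [hWi mWi eW]] : exists Wi, [/\ cong1 m N2'.+1 Wi, mZ m Wi &
    (T ^+ q * (T ^+ p)^-1) * Wi = 1].
  case: hcase => [[pq dq]|[qp dp]].
    have Tku : T ^+ (q - p) \is a GRing.unit by rewrite unitrX.
    exists (T ^+ (q - p))^-1; split.
    - apply: cong1_V => //; [exact: hTk | exact: mZ_TV].
    - exact: mZ_TV.
    - by rewrite -{1}(subnK pq) exprD mulrK // mulrV.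
  exists (T ^+ (p - q)); split.
  - exact: hTk.
  - exact: mZ_T.
  - by rewrite -{1}(subnK (ltnW qp)) exprD invrM ?unitrX // mulrA mulrV ?unitrX // mul1r mulVr // unitrX.
have -> : A ^ z = A ^ z * (T ^+ q * (T ^+ p)^-1) * Wi by rewrite -mulrA eW mulr1.
by apply: cong1_mul.
Qed.

Lemma stepz N2' z i j d : Y i j != 0 -> (j - i)%N = d -> (0 < d)%N -> gap Y d ->
  cong1 m N2'.+1 (A ^ z) -> cz m N2'.+1 (`|z|%:R * Y i j).
Proof.
move=> hc hd d0 gY hz.
have hA : cong1 m N2'.+1 (A ^+ `|z|).
  case: z hz => y hz; first by rewrite -exprnP in hz.
  have uz : A ^ Negz y \is a GRing.unit by apply: unitrXz.
  have -> : A ^+ `|Negz y| = (A ^ Negz y)^-1 by rewrite NegzE -exprnN invrK.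
  apply: cong1_V => //.
  rewrite NegzE -exprnN invrK; apply: mZ_X => //; exact: rho_mZ.
have hU : cong1 m N2'.+1 (U ^+ `|z|).
  rewrite /U exprAC; apply: cong1_X => //; apply: mZ_X => //; exact: rho_mZ.
have [_ e] := Upow hc hd d0 gY `|z|.
by rewrite -e; exact: hU.
Qed.

Lemma csp_core (H : 'M[rat]_n.+1 -> Prop) : is_subgroup_of Gset H -> finite_index_in Gset H ->
  exists N : nat, [/\ (0 < N)%N, coprime N m & forall g, congr_sub m N Gset g -> H g].
Proof.
move=> Hs Hf.
have [D [D0 HD]] := H_pow Hs Hf.
have hsub := Hs; case: Hs => [HG H1 HM HV].
have [i [j [d [hc hd d0 gY]]]] := pair_sel.
have lamr := lam_rel hc hd d0 gY.
have [c0 [e ce]] := Y_mZ i j.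
have c00 : c0 != 0.
  by apply: contraNneq hc => c0e; rewrite ce c0e mul0r.
have c0p : (0 < `|c0|)%N by rewrite absz_gt0.
have [D' [P [s0 [eD cD' dP]]]] := decomp m_gt0 D0.
have [K [P2 [s2 [eC cK dP2]]]] := decomp m_gt0 c0p.
have D'0 : (0 < D')%N by move: D0; rewrite eD muln_gt0 => /andP[].
have K0 : (0 < K)%N by move: c0p; rewrite eC muln_gt0 => /andP[].
have cN2 : coprime (D' * K) m by rewrite coprimeMl cD' cK.
have N20 : (0 < D' * K)%N by rewrite muln_gt0 D'0 K0.
move: cN2 N20; case N2e: (D' * K)%N => [//|N2'] cN2 _.
have [L [L0 hL]] := mat_order (N' := N2') m_gt0 cN2 (rho_mZ [:: lt]) (rho_mZV [:: lt]) Tu.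
set M := (D * L)%N.
have M0 : (0 < M)%N by rewrite muln_gt0 D0 L0.
set N1 := (m ^ M).+1.
have cN1 : coprime N1 m.
  apply: (@coprime_dvdr _ (m ^ M)); first by rewrite -{1}(expn1 m) dvdn_exp2l.
  exact: coprimeSn.
have cN : coprime (N1 * N2'.+1) m by rewrite coprimeMl cN1 cN2.
exists (N1 * N2'.+1)%N; split => //.
move=> g [[w ew] hg].
have [p [q [z enf]]] := G_nf w.
have cg : cong1 m (N1 * N2'.+1) (nfm p z q).
  by rewrite -enf -ew => k l; rewrite msubE oneE; exact: hg k l.
have gdi := cg i i; have gdj := cg j j.
rewrite msubE oneE eqxx diag_nfm in gdi.
rewrite msubE oneE eqxx diag_nfm in gdj.
have [rl1 rl2] := diag_rel p q z (Tdiag_nz j) (mR_neq0 m_gt0) lamr (mu_sq i) (mu_sq j).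
have hs : (A i i * A j j) ^ z = 1 \/ (A i i * A j j) ^ z = -1.
  by apply: sq1; apply: sq1z; rewrite exprMn mu_sq mu_sq mulr1.
have m1 : (1 < m)%N by [].
have hcase : ((p <= q)%N /\ (M %| q - p)%N) \/ ((q < p)%N /\ (M %| p - q)%N).
  case: (leqP p q) => pq; [left|right]; split => //.
    exact: (diag_div m1 M0 (ltn0Sn N2') cN hs (rl1 pq) gdi gdj).
  exact: (diag_div m1 M0 (ltn0Sn N2') cN hs (rl2 pq) gdj gdi).
have cg2 : cong1 m N2'.+1 (nfm p z q).
  move=> k l; apply: (cz_dvd m_gt0 _ _ (cg k l)); [exact: dvdn_mull | by rewrite muln_gt0].
have hAz : cong1 m N2'.+1 (A ^ z).
  apply: (stepb hL _ cg2).
  by case: hcase => [[h1 h2]|[h1 h2]]; [left|right]; split => //; apply: dvdn_trans h2; exact: dvdn_mull.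
have hz := stepz hc hd d0 gY hAz.
rewrite ce in hz.
have hz2 : cz m N2'.+1 ((`|z| * c0)%:~R).
  have -> : (`|z| * c0)%:~R = `|z|%:R * (c0%:~R / m%:R ^+ e) * m%:R ^+ e :> rat.
    by rewrite intrM -mulrA divfK ?mRX_neq0.
  apply: cz_mulr => //; exact: Zm_mX.
have dz : (D' %| `|z|)%N.
  have := cz_int m_gt0 (ltn0Sn N2') cN2 hz2; rewrite dvdzE abszM /= -N2e eC.
  have -> : (`|z| * (K * P2) = (`|z| * P2) * K)%N by ring.
  rewrite dvdn_pmul2r // => h.
  have cDm : coprime D' (m ^ s2) by apply: coprimeXr.
  have cDP : coprime D' P2 by exact: coprime_dvdr dP2 cDm.
  by rewrite -(Gauss_dvdl _ cDP).
have dzm : (D %| `|z| * m ^ s0)%N by rewrite eD dvdn_mul.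
rewrite ew enf.
have [w0 ew0] : exists w0 : int, z * (m ^ s0)%N%:Z = w0 * D%:Z.
  exists ((z * (m ^ s0)%N%:Z) %/ D%:Z)%Z; rewrite divzK //.
  by rewrite dvdzE abszM.
have Hmain : H (nfm p z p).
  rewrite -(nfm_shift p s0) ew0 -nfm_pow.
  apply: (HD (nfm (p + s0) w0 (p + s0))).
  by case: (nf_G (p + s0) w0 (p + s0)) => u ->; exists u.
have dM : (D %| M)%N by exact: dvdn_mulr.
case: hcase => [[pq dq]|[qp dp]].
  have dk : (D %| q - p)%N by apply: dvdn_trans dq.
  rewrite -(subnKC pq) -nfm_TX.
  apply: HM => //.
  rewrite -(divnK dk) exprM; apply: HD.
  by case: (TX_G ((q - p) %/ D)) => u ->; exists u.
have dk : (D %| p - q)%N by apply: dvdn_trans dp.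
rewrite -(subnKC (ltnW qp)) -nfm_TV.
apply: HM => //.
  by rewrite (subnKC (ltnW qp)).
rewrite -(divnK dk) exprM -exprVn; apply: HD.
by case: (TinvX_G ((p - q) %/ D)) => u ->; exists u.
Qed.

End BS.

Unset Implicit Arguments.

Theorem theorem1p5 (m n : nat) (hm : (2 <= m)%N) (hn : (1 <= n)%N)
  (rho : bsword -> 'M[rat]_n) :
  bs_hom m rho -> (forall w, in_Tn m (rho w)) -> bs_injective m rho ->
  has_CSP m (bs_image rho).
Proof.
case: n hn rho => [//|n] _ rho hom hT hinj H Hs Hf.
exact: (csp_core hm hom hT hinj Hs Hf).
Qed.
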